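(* Let $\mathbb{C}=(\mathbf{C},0,\mathbf{D},\mathcal{R})$ be a reactive system with redex RPOs, let $O$ be a set of contextual barbs, and let $L$ be a set of labels (arrows of $\mathbf{C}$). If $L$ is $O$-capturing and every label in $L$ is stable under barbed saturated bisimilarity $\sim^{BS}$, then $\sim^{BS}$ coincides with $L$-bisimilarity $\sim^{L}$.
   Context: A reactive system consists of a category $\mathbf{C}$, a distinguished object $0$, a composition-reflecting subcategory $\mathbf{D}$ of reactive contexts, and a set $\mathcal{R}\subseteq\bigcup_I\mathbf{C}(0,I)\times\mathbf{C}(0,I)$ of reduction rules. Terms are arrows with domain $0$; $C[P]$ denotes $C[-]\circ P$. Reduction: $P\rightsquigarrow Q$ iff $P=d\circ l$, $Q=d\circ r$ for some $\langle l,r\rangle\in\mathcal{R}$, $d\in\mathbf{D}$. For a commuting square $c_1\circ a_1=c_2\circ a_2$ with $a_1:K\to I_2$, $a_2:K\to I_3$, $c_1:I_2\to I_4$, $c_2:I_3\to I_4$, a candidate is $\langle I_5,e,f,g\rangle$ with $e\circ a_1=f\circ a_2$, $g\circ e=c_1$, $g\circ f=c_2$; an RPO is a candidate through which every other candidate $\langle I_6,e',f',g'\rangle$ factors via a unique $h:I_5\to I_6$ ($h\circ e=e'$, $h\circ f=f'$, $g'\circ h=g$); the square is an IPO if $\langle I_4,c_1,c_2,\mathrm{id}\rangle$ is an RPO. A redex square is a commuting square $C[-]\circ P=d\circ l$ with $\langle l,r\rangle\in\mathcal{R}$, $d\in\mathbf{D}$; the system has redex RPOs if every redex square has an RPO.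 IPO transitions: $P\xrightarrow{C[-]}_I d\circ r$ if $d\in\mathbf{D}$, $\langle l,r\rangle\in\mathcal{R}$ and $C[-]\circ P=d\circ l$ is an IPO. $L$-bisimulation: a symmetric relation $\mathcal{R}'$ such that if $P\,\mathcal{R}'\,Q$ and $P\xrightarrow{C[-]}_I P'$ then, if $C[-]\in L$, $Q\xrightarrow{C[-]}_I Q'$ with $P'\,\mathcal{R}'\,Q'$, and otherwise $C[Q]\rightsquigarrow Q'$ with $P'\,\mathcal{R}'\,Q'$; $\sim^L$ is the largest one. Barbs are predicates on terms; $P\downarrow_o$ means $P$ satisfies $o\in O$. Barbed saturated bisimilarity $\sim^{BS}$ is the largest symmetric relation $\mathcal{R}'$ such that if $P\,\mathcal{R}'\,Q$ then for all arrows $C[-]$ composable with $P$: $C[P]\downarrow_o$ implies $C[Q]\downarrow_o$, and $C[P]\rightsquigarrow P'$ implies $C[Q]\rightsquigarrow Q'$ with $P'\,\mathcal{R}'\,Q'$. A barb $o$ is contextual if whenever ($P\downarrow_o$ implies $Q\downarrow_o$) then for all $C[-]$, $C[P]\downarrow_o$ implies $C[Q]\downarrow_o$. $L$ is $O$-capturing if for each $o\in O$ there is $C[-]\in L$ such that for every term $P$, $P\downarrow_o$ iff $P\xrightarrow{C[-]}_I P'$ for some $P'$. A binary predicate $\mathcal{P}(X,Y)$ on terms is stable under a relation $\mathcal{R}'$ if whenever $P\,\mathcal{R}'\,Q$ and $\mathcal{P}(P,P')$ there is $Q'$ with $\mathcal{P}(Q,Q')$ and $P'\,\mathcal{R}'\,Q'$;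 a label $C[-]$ is stable under $\mathcal{R}'$ if the predicate $X\xrightarrow{C[-]}_I Y$ is. *)

(* Defs.v *)
Set Implicit Arguments.
Unset Strict Implicit.

Record Category := {
  Ob :> Type;
  Hom : Ob -> Ob -> Type;
  comp : forall A B C : Ob, Hom B C -> Hom A B -> Hom A C;
  idm : forall A : Ob, Hom A A;
  comp_assoc : forall (A B C D : Ob) (h : Hom C D) (g : Hom B C) (f : Hom A B),
      comp h (comp g f) = comp (comp h g) f;
  comp_id_l : forall (A B : Ob) (f : Hom A B), comp (idm B) f = f;
  comp_id_r : forall (A B : Ob) (f : Hom A B), comp f (idm A) = f
}.
Arguments comp {c A B C} _ _.
Arguments idm {c} A.
Arguments Hom {c} _ _.

(** Reactive systems: category, distinguished object 0, a
    composition-reflecting subcategory D of reactive contexts (given by the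
    predicate of its arrows; a subcategory with all objects is determined by
    its arrows, and "subcategory" here is identity- and composition-closed),
    and a set of reduction rules. *)
Record ReactiveSystem := {
  RCat : Category;
  zero : RCat;
  Dctx : forall A B : RCat, @Hom RCat A B -> Prop;
  D_id : forall A : RCat, Dctx (idm A);
  D_comp : forall (A B C : RCat) (g : Hom B C) (f : Hom A B),
      Dctx g -> Dctx f -> Dctx (comp g f);
  D_reflect : forall (A B C : RCat) (g : Hom B C) (f : Hom A B),
      Dctx (comp g f) -> Dctx g /\ Dctx f;
  Rules : forall I : RCat, @Hom RCat zero I -> @Hom RCat zero I -> Prop
}.
Arguments Dctx {r A B} _.
Arguments Rules {r I} _ _.

Section RS.
Variable RS : ReactiveSystem.
Local Notation C := (RCat RS).
Local Notation O0 := (zero RS).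

Definition term (I : C) := @Hom C O0 I.

Definition reduces (J : C) (P Q : term J) : Prop :=
  exists (I : C) (l r : term I) (d : Hom I J),
    Dctx d /\ Rules l r /\ P = comp d l /\ Q = comp d r.

Definition is_candidate (K I2 I3 I4 : C) (a1 : Hom K I2) (a2 : Hom K I3)
  (c1 : Hom I2 I4) (c2 : Hom I3 I4)
  (I5 : C) (e : Hom I2 I5) (f : Hom I3 I5) (g : Hom I5 I4) : Prop :=
  comp e a1 = comp f a2 /\ comp g e = c1 /\ comp g f = c2.

Definition is_RPO (K I2 I3 I4 : C) (a1 : Hom K I2) (a2 : Hom K I3)
  (c1 : Hom I2 I4) (c2 : Hom I3 I4)
  (I5 : C) (e : Hom I2 I5) (f : Hom I3 I5) (g : Hom I5 I4) : Prop :=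
  is_candidate a1 a2 c1 c2 e f g /\
  forall (I6 : C) (e' : Hom I2 I6) (f' : Hom I3 I6) (g' : Hom I6 I4),
    is_candidate a1 a2 c1 c2 e' f' g' ->
    exists h : Hom I5 I6,
      (comp h e = e' /\ comp h f = f' /\ comp g' h = g) /\
      forall h' : Hom I5 I6,
        comp h' e = e' /\ comp h' f = f' /\ comp g' h' = g -> h' = h.

Definition is_IPO (K I2 I3 I4 : C) (a1 : Hom K I2) (a2 : Hom K I3)
  (c1 : Hom I2 I4) (c2 : Hom I3 I4) : Prop :=
  comp c1 a1 = comp c2 a2 /\ is_RPO a1 a2 c1 c2 c1 c2 (idm I4).

Definition has_redex_RPOs : Prop :=
  forall (I J I' : C) (P : term I) (Cx : Hom I J) (l r : term I') (d : Hom I' J),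
    Rules l r -> Dctx d -> comp Cx P = comp d l ->
    exists (I5 : C) (e : Hom I I5) (f : Hom I' I5) (g : Hom I5 J),
      is_RPO P l Cx d e f g.

Definition ipo_trans (I J : C) (P : term I) (Cx : Hom I J) (Q : term J) : Prop :=
  exists (I' : C) (l r : term I') (d : Hom I' J),
    Dctx d /\ Rules l r /\ comp Cx P = comp d l /\ is_IPO P l Cx d /\
    Q = comp d r.

Definition trel := forall I : C, term I -> term I -> Prop.

Definition symmetric_trel (R : trel) : Prop :=
  forall (I : C) (P Q : term I), R I P Q -> R I Q P.

Definition labels := forall A B : C, Hom A B -> Prop.

Definition is_L_bisim (L : labels) (R : trel) : Prop :=
  symmetric_trel R /\
  forall (I J : C) (P Q : term I) (Cx : Hom I J) (P' : term J),
    R I P Q -> ipo_trans P Cx P' ->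
    (L I J Cx -> exists Q' : term J, ipo_trans Q Cx Q' /\ R J P' Q') /\
    (~ L I J Cx -> exists Q' : term J, reduces (comp Cx Q) Q' /\ R J P' Q').

Definition L_bisimilar (L : labels) : trel :=
  fun I P Q => exists R : trel, is_L_bisim L R /\ R I P Q.

Definition barb := forall I : C, term I -> Prop.

Definition is_BS_bisim (O : barb -> Prop) (R : trel) : Prop :=
  symmetric_trel R /\
  forall (I : C) (P Q : term I), R I P Q ->
    forall (J : C) (Cx : Hom I J),
      (forall o : barb, O o -> o J (comp Cx P) -> o J (comp Cx Q)) /\
      (forall P' : term J, reduces (comp Cx P) P' ->
         exists Q' : term J, reduces (comp Cx Q) Q' /\ R J P' Q').

Definition BS_bisimilar (O : barb -> Prop) : trel :=
  fun I P Q => exists R : trel, is_BS_bisim O R /\ R I P Q.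

Definition contextual (o : barb) : Prop :=
  forall (I : C) (P Q : term I),
    (o I P -> o I Q) ->
    forall (J : C) (Cx : Hom I J), o J (comp Cx P) -> o J (comp Cx Q).

Definition O_capturing (O : barb -> Prop) (L : labels) : Prop :=
  forall o : barb, O o ->
    forall I : C, exists (J : C) (Cx : Hom I J),
      L I J Cx /\
      forall P : term I, o I P <-> exists P' : term J, ipo_trans P Cx P'.

Definition stable_label (I J : C) (Cx : Hom I J) (R : trel) : Prop :=
  forall (P Q : term I) (P' : term J),
    R I P Q -> ipo_trans P Cx P' ->
    exists Q' : term J, ipo_trans Q Cx Q' /\ R J P' Q'.

End RS.

(* Main.v *)
Require Import Defs.
From Stdlib Require Import Classical.

Lemma rpo_ipo (RS : ReactiveSystem) (I J I' I5 : RCat RS) (P : term I)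
  (l : term I') (Cx : Hom I J) (d : Hom I' J) (e : Hom I I5) (f : Hom I' I5)
  (g : Hom I5 J) :
  is_RPO P l Cx d e f g -> is_IPO P l e f.
Proof.
  intros [[H1 [H2 H3]] U]. split; [exact H1|]. split.
  - split; [exact H1|]. rewrite !comp_id_l; split; reflexivity.
  - intros I6 e' f' g' [C1 [C2 C3]].
    assert (Hc : is_candidate P l Cx d e' f' (comp g g')).
    { unfold is_candidate; split; [exact C1|].
      rewrite <- !comp_assoc, C2, C3. split; assumption. }
    destruct (U _ _ _ _ Hc) as [h [[Hh1 [Hh2 Hh3]] Hu]].
    destruct (U _ _ _ _ (conj H1 (conj H2 H3))) as [h0 [_ Hu0]].
    exists h. split.
    + split; [exact Hh1| split; [exact Hh2|]].
      assert (A : comp g' h = h0).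
      { apply Hu0. split; [|split].
        - rewrite <- comp_assoc, Hh1; exact C2.
        - rewrite <- comp_assoc, Hh2; exact C3.
        - rewrite comp_assoc; exact Hh3. }
      assert (B : idm I5 = h0).
      { apply Hu0. rewrite !comp_id_l, comp_id_r. auto. }
      congruence.
    + intros h' [E1 [E2 E3]]. apply Hu. split; [exact E1|split; [exact E2|]].
      rewrite <- comp_assoc, E3, comp_id_r. reflexivity.
Qed.

Theorem mainTheorem2 (RS : ReactiveSystem) (O : barb RS -> Prop)
  (L : labels RS) :
  has_redex_RPOs RS ->
  (forall o : barb RS, O o -> contextual o) ->
  O_capturing O L ->
  (forall (I J : RCat RS) (Cx : Hom I J), L I J Cx ->
     stable_label Cx (BS_bisimilar O)) ->
  forall (I : RCat RS) (P Q : term I),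
    BS_bisimilar O P Q <-> L_bisimilar L P Q.
Proof.
  intros HR Hctx Hcap Hstab I P Q. split.
  - intros HBS. exists (BS_bisimilar O). split; [|exact HBS].
    split.
    + intros I0 P0 Q0 [R [HRb HR0]]. exists R. split; [exact HRb|].
      apply (proj1 HRb); exact HR0.
    + intros I0 J P0 Q0 Cx P' HPQ Htr. split.
      * intros HL. exact (Hstab _ _ _ HL _ _ _ HPQ Htr).
      * intros _. destruct HPQ as [R [HRb HR0]].
        destruct Htr as [I' [l [r [d [Hd [Hr [Heq [_ HP']]]]]]]].
        destruct (proj2 HRb _ _ _ HR0 _ Cx) as [_ Hred].
        destruct (Hred P') as [Q' [HQ' HR']].
        { exists I', l, r, d. auto. }
        exists Q'. split; [exact HQ'|]. exists R. auto.
  - intros HLb.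
    set (R := fun (J : RCat RS) (X Y : term J) =>
      exists (I0 : RCat RS) (P0 Q0 : term I0) (C0 : Hom I0 J),
        L_bisimilar L P0 Q0 /\ X = comp C0 P0 /\ Y = comp C0 Q0).
    exists R. split; [|exists I, P, Q, (idm I); rewrite !comp_id_l; auto].
    split.
    + intros J X Y [I0 [P0 [Q0 [Cx [H [E1 E2]]]]]].
      exists I0, Q0, P0, Cx. split; [|auto].
      destruct H as [R' [[Rs Hb] HR']]. exists R'. split; [split; assumption|].
      apply Rs; exact HR'.
    + intros J X Y [I0 [P0 [Q0 [C0 [HL [E1 E2]]]]]] K Cx. subst. split.
      * intros o Ho Hob. rewrite comp_assoc in *.
        apply (Hctx o Ho I0 P0 Q0); auto. intros HoP.
        destruct (Hcap o Ho I0) as [J' [Cl [HLl Hiff]]].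
        apply Hiff. apply Hiff in HoP. destruct HoP as [P' HP'].
        destruct HL as [R' [[_ Hb] HR']].
        destruct (proj1 (Hb _ _ _ _ _ _ HR' HP') HLl) as [Q' [HQ' _]].
        exists Q'; exact HQ'.
      * intros P' Hred. rewrite comp_assoc in Hred |- *.
        destruct Hred as [I' [l [r [d [Hd [Hr [Heq HP']]]]]]].
        destruct (HR _ _ _ P0 (comp Cx C0) l r d Hr Hd Heq) as [I5 [e [f [g HRPO]]]].
        pose proof (@rpo_ipo RS _ _ _ _ _ _ _ _ _ _ _ HRPO) as Hipo.
        destruct HRPO as [[Hc1 [Hc2 Hc3]] _].
        rewrite <- Hc3 in Hd. apply D_reflect in Hd. destruct Hd as [Dg Df].
        assert (Htr : ipo_trans P0 e (comp f r)).
        { exists I', l, r, f. auto. }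
        destruct HL as [R' [[Rs Hb] HR']].
        destruct (Hb _ _ _ _ _ _ HR' Htr) as [HinL HnotL].
        assert (HP'' : P' = comp g (comp f r)).
        { rewrite HP', <- Hc3, comp_assoc. reflexivity. }
        destruct (classic (L _ _ e)) as [H|H].
        -- destruct (HinL H) as [Q'' [HQ'' HRQ]].
           destruct HQ'' as [I2 [l2 [r2 [d2 [Hd2 [Hr2 [Heq2 [_ EQ]]]]]]]].
           exists (comp g Q''). split.
           ++ exists I2, l2, r2, (comp g d2). split; [apply D_comp; assumption|].
              split; [exact Hr2|]. split.
              ** rewrite <- Hc2, <- comp_assoc, Heq2, comp_assoc.
                 reflexivity.
              ** rewrite EQ, comp_assoc. reflexivity.
           ++ exists I5, (comp f r), Q'', g. split; [|split; [exact HP''|reflexivity]].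
              exists R'. split; [split; assumption|exact HRQ].
        -- destruct (HnotL H) as [Q'' [HQ'' HRQ]].
           destruct HQ'' as [I2 [l2 [r2 [d2 [Hd2 [Hr2 [Heq2 EQ]]]]]]].
           exists (comp g Q''). split.
           ++ exists I2, l2, r2, (comp g d2). split; [apply D_comp; assumption|].
              split; [exact Hr2|]. split.
              ** rewrite <- Hc2, <- comp_assoc, Heq2, comp_assoc.
                 reflexivity.
              ** rewrite EQ, comp_assoc. reflexivity.
           ++ exists I5, (comp f r), Q'', g. split; [|split; [exact HP''|reflexivity]].
              exists R'. split; [split; assumption|exact HRQ].
Qed.
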